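(* For every integer $n\ge 4$, $\mathrm{wdim}_3(K_n\times K_n)=2n$.
   Context: $K_n\times K_n$ is the direct product of two complete graphs on $n$ vertices: vertex set $[n]\times[n]$ with $[n]=\{1,\dots,n\}$, and $(i,j)$ adjacent to $(i',j')$ iff $i\ne i'$ and $j\ne j'$. For a connected graph $G$ with distance $d_G$, vertices $x,y,z$ and $S\subseteq V(G)$, let $\Delta_z(x,y)=|d_G(x,z)-d_G(y,z)|$ and $\Delta_S(x,y)=\sum_{z\in S}\Delta_z(x,y)$. A set $S$ is a weak $k$-resolving set if $\Delta_S(x,y)\ge k$ for all distinct $x,y\in V(G)$, and $\mathrm{wdim}_k(G)$ is the minimum cardinality of a weak $k$-resolving set of $G$. *)

(* Defs.v *)
From mathcomp Require Import all_boot.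
Set Implicit Arguments. Unset Strict Implicit. Unset Printing Implicit Defensive.

Section Graph.
Variable T : finType.
Variable e : rel T.

Fixpoint ball (k : nat) (x : T) : {set T} :=
  if k is k'.+1 then
    ball k' x :|: [set y | [exists z in ball k' x, e z y]]
  else [set x].

(* shortest-path distance: least k with y within k steps of x
   (equals #|T| only if y is unreachable, which cannot happen in a
   connected graph) *)
Definition gdist (x y : T) : nat :=
  find (fun k => y \in ball k x) (iota 0 #|T|).

Definition absdiff (a b : nat) : nat := maxn a b - minn a b.

Definition Delta (z x y : T) : nat := absdiff (gdist x z) (gdist y z).

Definition DeltaS (S : {set T}) (x y : T) : nat := \sum_(z in S) Delta z x y.

Definition weak_resolving (k : nat) (S : {set T}) : bool :=
  [forall x, forall y, (x != y) ==> (k <= DeltaS S x y)].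

(* minimum cardinality of a weak k-resolving set (#|T|.+1 if none exists) *)
Definition wdim (k : nat) : nat :=
  \big[minn/#|T|.+1]_(S : {set T} | weak_resolving k S) #|S|.
End Graph.

(* direct product K_n x K_n on vertex set [n] x [n] *)
Definition KnKn_adj (n : nat) : rel ('I_n * 'I_n) :=
  fun u v => (u.1 != v.1) && (u.2 != v.2).
Arguments KnKn_adj n : clear implicits.

(* Main.v *)
Require Import Defs.
From mathcomp Require Import all_boot zify.
Set Implicit Arguments. Unset Strict Implicit. Unset Printing Implicit Defensive.

Section K.
Variable n : nat.
Hypothesis n3 : 3 <= n.
Local Notation T := ('I_n * 'I_n)%type.
Local Notation e := (KnKn_adj n).

Definition dd (x y : T) : nat :=
  if x == y then 0 else if (x.1 != y.1) && (x.2 != y.2) then 1 else 2.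

Lemma avoid2 (a b : 'I_n) : exists c : 'I_n, (c != a) && (c != b).
Proof.
have [k [Hk [Ha Hb]]] : exists k, k < 3 /\ k != a /\ k != b.
  case: (eqVneq (a : nat) 0) => Ha0; case: (eqVneq (b : nat) 0) => Hb0.
  - by exists 1; lia.
  - case: (eqVneq (b : nat) 1) => Hb1; first by exists 2; lia.
    by exists 1; lia.
  - case: (eqVneq (a : nat) 1) => Ha1; first by exists 2; lia.
    by exists 1; lia.
  - by exists 0; lia.
have kn : k < n by apply: leq_trans Hk n3.
by exists (Ordinal kn); rewrite -!(inj_eq val_inj) /= Ha Hb.
Qed.

Lemma ball1 (x y : T) : (y \in ball e 1 x) = (y == x) || e x y.
Proof.
rewrite /= !inE; congr (_ || _); apply/existsP/idP => [[z /andP [] ]|H].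
  by rewrite inE => /eqP ->.
by exists x; rewrite inE eqxx.
Qed.

Lemma ball2 (x y : T) : y \in ball e 2 x.
Proof.
rewrite [ball _ 2 _]/= inE ball1.
case: (boolP ((y == x) || e x y)) => //= H; rewrite inE.
have [c1 /andP [c1a c1b]] := avoid2 x.1 y.1.
have [c2 /andP [c2a c2b]] := avoid2 x.2 y.2.
apply/existsP; exists (c1, c2); rewrite ball1 /KnKn_adj /=. idtac.
by rewrite (eq_sym x.1) (eq_sym x.2) c1a c2a c1b c2b orbT.
Qed.

Lemma gdistE (x y : T) : gdist e x y = dd x y.
Proof.
rewrite /gdist card_prod card_ord.
have -> : n * n = 3 + (n * n - 3) by nia.
rewrite iotaD /= ball2.
have -> : (y \in ball e 1 x) = (y == x) || e x y by exact: ball1.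
have -> : (y \in ball e 0 x) = (y == x) by rewrite /= inE.
rewrite /dd eq_sym; case: (x == y) => //=.
by rewrite /KnKn_adj; case: (_ && _).
Qed.

Ltac brute := repeat match goal with
  | |- context [?u == ?v :> 'I_n] => case: (eqVneq u v) => [?|?]; subst
  end.

Lemma dGP (x y z : T) : x.1 != y.1 -> x.2 != y.2 ->
  absdiff (dd x z) (dd y z) + (z == x) + (z == y) + 2 * (z == (x.1, y.2)) + 2 * (z == (y.1, x.2))
  = (z.1 == x.1) + (z.1 == y.1) + (z.2 == x.2) + (z.2 == y.2).
Proof.
move: x y z => [a b] [c d] [p q] /= H1 H2; rewrite /dd /absdiff /= !xpair_eqE.
move: H1 H2; brute; rewrite ?eqxx //=.
all: try (match goal with H : is_true (?u != ?u) |- _ => by rewrite eqxx in H end).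
Qed.

Lemma dR (a b d : 'I_n) (z : T) : b != d ->
  absdiff (dd (a, b) z) (dd (a, d) z) = (z == (a, b)) + (z == (a, d)) + (z.2 == b) + (z.2 == d).
Proof.
move: z => [p q] /= H2; rewrite /dd /absdiff /= !xpair_eqE.
move: H2; brute; rewrite ?eqxx //=.
all: try (match goal with H : is_true (?u != ?u) |- _ => by rewrite eqxx in H end).
Qed.

Lemma dC (a c b : 'I_n) (z : T) : a != c ->
  absdiff (dd (a, b) z) (dd (c, b) z) = (z == (a, b)) + (z == (c, b)) + (z.1 == a) + (z.1 == c).
Proof.
move: z => [p q] /= H2; rewrite /dd /absdiff /= !xpair_eqE.
move: H2; brute; rewrite ?eqxx //=.
all: try (match goal with H : is_true (?u != ?u) |- _ => by rewrite eqxx in H end).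
Qed.

Definition r (S : {set T}) (i : 'I_n) := \sum_(j < n) ((i, j) \in S : nat).
Definition c (S : {set T}) (j : 'I_n) := \sum_(i < n) ((i, j) \in S : nat).

Lemma sumS_ind (S : {set T}) (w : T) : \sum_(z in S) (z == w : nat) = (w \in S).
Proof.
rewrite big_mkcond /= (bigD1 w) //= big1 ?addn0; first by rewrite eqxx; case: (w \in S).
by move=> z /negbTE ->; case: (z \in S).
Qed.

Lemma sumS_ind2 (S : {set T}) (w : T) : \sum_(z in S) 2 * (z == w : nat) = 2 * (w \in S).
Proof. by rewrite -sumS_ind big_distrr. Qed.

Lemma sum_pair (F : T -> nat) : \sum_(z : T) F z = \sum_(i < n) \sum_(j < n) F (i, j).
Proof.
rewrite (pair_bigA _ (fun i j => F (i, j))) /=; symmetry; under eq_bigr => p _ do rewrite -surjective_pairing. done.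
Qed.

Lemma sum_row (S : {set T}) i : \sum_(z in S) (z.1 == i : nat) = r S i.
Proof.
rewrite big_mkcond /= sum_pair (bigD1 i) //= [X in _ + X]big1 ?addn0.
  by apply: eq_bigr => j _ /=; rewrite eqxx; case: (_ \in S).
move=> i' /negbTE Hi; apply: big1 => j _ /=; rewrite Hi; by case: (_ \in S).
Qed.

Lemma sum_col (S : {set T}) j : \sum_(z in S) (z.2 == j : nat) = c S j.
Proof.
rewrite big_mkcond /= sum_pair exchange_big (bigD1 j) //= [X in _ + X]big1 ?addn0.
  by apply: eq_bigr => i _ /=; rewrite eqxx; case: (_ \in S).
move=> j' /negbTE Hj; apply: big1 => i _ /=; rewrite Hj; by case: (_ \in S).
Qed.

Lemma card_r (S : {set T}) : #|S| = \sum_(i < n) r S i.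
Proof.
rewrite -sum1_card big_mkcond /= sum_pair; apply: eq_bigr => i _.
by apply: eq_bigr => j _; case: (_ \in S).
Qed.

Lemma card_c (S : {set T}) : #|S| = \sum_(j < n) c S j.
Proof.
by rewrite card_r exchange_big.
Qed.

Lemma DeltaSE (S : {set T}) x y :
  DeltaS (KnKn_adj n) S x y = \sum_(z in S) absdiff (dd x z) (dd y z).
Proof. by apply: eq_bigr => z _; rewrite /Delta !gdistE. Qed.

Lemma DGP (S : {set T}) (x y : T) : x.1 != y.1 -> x.2 != y.2 ->
  DeltaS (KnKn_adj n) S x y + (x \in S) + (y \in S) + 2 * ((x.1, y.2) \in S)
   + 2 * ((y.1, x.2) \in S) = r S x.1 + r S y.1 + c S x.2 + c S y.2.
Proof.
move=> H1 H2.
have E : \sum_(z in S) (absdiff (dd x z) (dd y z) + (z == x) + (z == y) + 2 * (z == (x.1, y.2)) + 2 * (z == (y.1, x.2)))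
  = \sum_(z in S) ((z.1 == x.1) + (z.1 == y.1) + (z.2 == x.2) + (z.2 == y.2) : nat).
  by apply: eq_bigr => z _; exact: dGP.
rewrite !big_split /= !sumS_ind !big1_eq !sum_row !sum_col in E.
by rewrite DeltaSE -E !addn0 !addnn -!mul2n.
Qed.

Lemma DR (S : {set T}) (a b d : 'I_n) : b != d ->
  DeltaS (KnKn_adj n) S (a, b) (a, d) = ((a, b) \in S) + ((a, d) \in S) + c S b + c S d.
Proof.
move=> H.
have E : \sum_(z in S) absdiff (dd (a, b) z) (dd (a, d) z) = \sum_(z in S) ((z == (a, b)) + (z == (a, d)) + (z.2 == b) + (z.2 == d) : nat).
  by apply: eq_bigr => z _; exact: dR.
rewrite !big_split /= in E.
by rewrite DeltaSE E !sumS_ind !sum_col.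
Qed.

Lemma DC (S : {set T}) (a a2 b : 'I_n) : a != a2 ->
  DeltaS (KnKn_adj n) S (a, b) (a2, b) = ((a, b) \in S) + ((a2, b) \in S) + r S a + r S a2.
Proof.
move=> H.
have E : \sum_(z in S) absdiff (dd (a, b) z) (dd (a2, b) z) = \sum_(z in S) ((z == (a, b)) + (z == (a2, b)) + (z.1 == a) + (z.1 == a2) : nat).
  by apply: eq_bigr => z _; exact: dC.
rewrite !big_split /= in E.
by rewrite DeltaSE E !sumS_ind !sum_row.
Qed.


Lemma sum_eq1 (k : 'I_n) (a : nat) : \sum_(i < n) a * (i == k) = a.
Proof.
rewrite (bigD1 k) //= eqxx muln1 big1 ?addn0 // => i /negbTE ->; by rewrite muln0.
Qed.

Lemma two_le (f : 'I_n -> nat) j j' : j != j' -> f j + f j' <= \sum_(i < n) f i.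
Proof.
move=> H; rewrite (bigD1 j) //= (bigD1 j') /=; last by rewrite eq_sym H.
by rewrite addnA leq_addr.
Qed.

Lemma pos_sum (f : 'I_n -> nat) : 0 < \sum_(i < n) f i -> exists i, 0 < f i.
Proof.
case: (pickP (fun i => 0 < f i)) => [i Hi|H]; first by exists i.
by rewrite big1 // => i _; move: (H i) => /= /negbT; rewrite -leqNgt leqn0 => /eqP.
Qed.

Lemma AL (f : 'I_n -> nat) : (forall j j', j != j' -> 3 <= f j + f j') ->
  \sum_(i < n) f i < 2 * n -> exists j0, f j0 = 1 /\ forall k, k != j0 -> f k = 2.
Proof.
move=> Hp Hs.
have C2 : \sum_(i < n) 2 = 2 * n by rewrite sum_nat_const card_ord mulnC.
have C3 : \sum_(i < n) 3 = 3 * n by rewrite sum_nat_const card_ord mulnC.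
have [j0 Hj0] : exists j0, f j0 <= 1.
  case: (pickP (fun j => f j <= 1)) => [j Hj|H]; first by exists j.
  have : \sum_(i < n) 2 <= \sum_(i < n) f i.
    by apply: leq_sum => i _; move: (H i) => /= /negbT; rewrite -ltnNge.
  by rewrite C2; lia.
have Hk : forall k, k != j0 -> 3 <= f j0 + f k by move=> k Hk; apply: Hp; rewrite eq_sym.
have Hj1 : f j0 = 1.
  case: (eqVneq (f j0) 0) => E; last by lia.
  have : \sum_(i < n) 3 <= \sum_(i < n) (f i + 3 * (i == j0)).
    apply: leq_sum => i _; case: (eqVneq i j0) => [->|/Hk]; lia.
  have -> : \sum_(i < n) (f i + 3 * (i == j0)) = \sum_(i < n) f i + 3.
    by rewrite big_split /= sum_eq1.
  by rewrite C3; lia.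
exists j0; split => // k kj.
have := Hk _ kj; rewrite Hj1 => Hk2.
have : \sum_(i < n) (2 + (f k - 2) * (i == k)) <= \sum_(i < n) (f i + 1 * (i == j0)).
  apply: leq_sum => i _; case: (eqVneq i k) => [->|ik]; first by rewrite (negbTE kj); lia.
  case: (eqVneq i j0) => [->|/Hk]; lia.
have -> : \sum_(i < n) (f i + 1 * (i == j0)) = \sum_(i < n) f i + 1.
  by rewrite big_split /= sum_eq1.
have -> : \sum_(i < n) (2 + (f k - 2) * (i == k)) = 2 * n + (f k - 2).
  by rewrite big_split /= sum_eq1 C2.
lia.
Qed.

Definition wres (S : {set T}) := forall x y : T, x != y -> 3 <= DeltaS (KnKn_adj n) S x y.

Lemma colpair S : wres S -> forall j j', j != j' -> 3 <= c S j + c S j'.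
Proof.
move=> HS j j' H; case: (leqP 3 (c S j + c S j')) => // Hlt.
have Hi : forall i, 1 <= ((i, j) \in S) + ((i, j') \in S).
  move=> i; have Hxy : (i, j) != (i, j') by rewrite xpair_eqE eqxx (negbTE H).
  have := HS _ _ Hxy; rewrite DR //; case: ((i, j) \in S); case: ((i, j') \in S) => //=; lia.
have : \sum_(i < n) 1 <= \sum_(i < n) (((i, j) \in S) + ((i, j') \in S) : nat).
  by apply: leq_sum => i _; exact: Hi.
have -> : \sum_(i < n) (((i, j) \in S) + ((i, j') \in S) : nat) = c S j + c S j' by rewrite big_split.
by rewrite sum_nat_const card_ord; lia.
Qed.

Lemma rowpair S : wres S -> forall i i', i != i' -> 3 <= r S i + r S i'.
Proof.
move=> HS i i' H; case: (leqP 3 (r S i + r S i')) => // Hlt.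
have Hj : forall j, 1 <= ((i, j) \in S) + ((i', j) \in S).
  move=> j; have Hxy : (i, j) != (i', j) by rewrite xpair_eqE eqxx (negbTE H).
  have := HS _ _ Hxy; rewrite DC //; case: ((i, j) \in S); case: ((i', j) \in S) => //=; lia.
have : \sum_(j < n) 1 <= \sum_(j < n) (((i, j) \in S) + ((i', j) \in S) : nat).
  by apply: leq_sum => j _; exact: Hj.
have -> : \sum_(j < n) (((i, j) \in S) + ((i', j) \in S) : nat) = r S i + r S i' by rewrite big_split.
by rewrite sum_nat_const card_ord; lia.
Qed.

Lemma rect S (a b : T) : wres S -> a \in S -> b \in S -> a.1 != b.1 -> a.2 != b.2 ->
  r S a.1 + r S b.1 + c S a.2 + c S b.2 <= 6 -> False.
Proof.
move=> HS Ha Hb H1 H2 H6.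
have H2' : b.2 != a.2 by rewrite eq_sym.
have E := @DGP S (a.1, b.2) (b.1, a.2) H1 H2'.
rewrite /= -!surjective_pairing Ha Hb in E.
have Hxy : (a.1, b.2) != (b.1, a.2) by rewrite xpair_eqE (negbTE H1).
have := HS _ _ Hxy.
move: E; set D := DeltaS _ _ _ _; move: ((a.1, b.2) \in S) ((b.1, a.2) \in S) => [] [] /=; lia.
Qed.


Lemma lower S : wres S -> 2 * n <= #|S|.
Proof.
move=> HS; case: (leqP (2 * n) #|S|) => // Hlt.
have Hcs : \sum_(j < n) c S j < 2 * n by rewrite -card_c.
have Hrs : \sum_(i < n) r S i < 2 * n by rewrite -card_r.
have [j0 [Hc0 Hc]] := AL (colpair HS) Hcs.
have [i0 [Hr0 Hr]] := AL (rowpair HS) Hrs.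
have inP : forall x : T, 0 < (x \in S : nat) -> x \in S by move=> x; case: (x \in S).
have row2 : forall i j j', j != j' -> (i, j) \in S -> (i, j') \in S -> 2 <= r S i.
  move=> i j j' H Hj Hj'; have := two_le (fun k => ((i, k) \in S : nat)) H.
  by rewrite /= Hj Hj'.
have col2 : forall j i i', i != i' -> (i, j) \in S -> (i', j) \in S -> 2 <= c S j.
  move=> j i i' H Hi Hi'; have := two_le (fun k => ((k, j) \in S : nat)) H.
  by rewrite /= Hi Hi'.
exfalso.
case: (boolP ((i0, j0) \in S)) => H00.
  have [j /andP [jj0 _]] := avoid2 j0 j0.
  have [i' /inP Hi'] : exists i', 0 < ((i', j) \in S : nat).
    by apply: pos_sum; rewrite -/(c S j) Hc.
  have i'i0 : i' != i0.
    apply/eqP => E; subst i'.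
    have j0j : j0 != j by rewrite eq_sym.
    by have := row2 i0 j0 j j0j H00 Hi'; rewrite Hr0.
  apply: (@rect S (i0, j0) (i', j)) => //=; first by rewrite eq_sym.
    by rewrite eq_sym.
  by rewrite Hr0 Hc0 Hr // Hc.
have [j1 /inP Hj1] : exists j1, 0 < ((i0, j1) \in S : nat).
  by apply: pos_sum; rewrite -/(r S i0) Hr0.
have j1j0 : j1 != j0 by apply/eqP => E; subst j1; rewrite Hj1 in H00.
have [i1 /inP Hi1] : exists i1, 0 < ((i1, j0) \in S : nat).
  by apply: pos_sum; rewrite -/(c S j0) Hc0.
have i1i0 : i1 != i0 by apply/eqP => E; subst i1; rewrite Hi1 in H00.
apply: (@rect S (i0, j1) (i1, j0)) => //=; first by rewrite eq_sym.
by rewrite Hr0 Hc0 Hr // Hc.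
Qed.

Lemma succmod a : a < n -> a.+1 %% n = (if a.+1 < n then a.+1 else 0).
Proof.
move=> H; case: ltnP => H2; first by rewrite modn_small.
have -> : a.+1 = n by lia.
by rewrite modnn.
Qed.

Lemma ordS_neq (i : 'I_n) : ordS i != i.
Proof.
rewrite -(inj_eq val_inj) /= succmod //; have := ltn_ord i; case: (ltnP i.+1 n) => H; lia.
Qed.

Lemma ordSS_neq (i : 'I_n) : ordS (ordS i) != i.
Proof.
rewrite -(inj_eq val_inj) /= (succmod (ltn_ord i)).
have := ltn_ord i; case: (ltnP i.+1 n) => H.
  rewrite (succmod H); case: (ltnP i.+2 n) => H3; lia.
rewrite modn_small; lia.
Qed.

Definition S0 : {set T} := [set z : T | (z.2 == z.1) || (z.2 == ordS z.1)].

Lemma S0_r i : r S0 i = 2.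
Proof.
rewrite /r.
have -> : \sum_(j < n) ((i, j) \in S0 : nat) = \sum_(j < n) (1 * (j == i) + 1 * (j == ordS i)).
  apply: eq_bigr => j _; rewrite inE /=.
  case: (eqVneq j i) => [->|]; first by rewrite eq_sym (negbTE (ordS_neq i)).
  by case: (j == ordS i).
by rewrite big_split /= !sum_eq1.
Qed.

Lemma S0_c j : r S0 j = 2 -> c S0 j = 2.
Proof.
move=> _; rewrite /c.
have -> : \sum_(i < n) ((i, j) \in S0 : nat) = \sum_(i < n) (1 * (i == j) + 1 * (i == ord_pred j)).
  apply: eq_bigr => i _; rewrite inE /=.
  have -> : (j == ordS i) = (i == ord_pred j).
    by apply/eqP/eqP => [->|->]; [rewrite ordSK | rewrite ord_predK].
  rewrite (eq_sym j i).
  case: (eqVneq i j) => [->|ij] /=; last by case: (_ == _).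
  case: (eqVneq j (ord_pred j)) => // E.
  by have := ordS_neq j; rewrite {1}E ord_predK eqxx.
by rewrite big_split /= !sum_eq1.
Qed.

Ltac fin n := do 8 try match goal with
 | H : is_true (?u != ?u) |- _ => by rewrite eqxx in H
 | H : ordS (ordS ?u) = ?u |- _ => by move: (ordSS_neq u); rewrite H eqxx
 | H : ?u = ordS (ordS ?u) |- _ => by move: (ordSS_neq u); rewrite -H eqxx
 | H : ordS ?u = ?u |- _ => by move: (ordS_neq u); rewrite H eqxx
 | H : ?u = ordS ?u |- _ => by move: (ordS_neq u); rewrite -H eqxx
 | H : ordS ?u = ordS ?v |- _ => move: (@ordS_inj n _ _ H) => {H} ?
 | H : ?u = ?v |- _ => first [subst u | subst v]
 end.

Lemma norect (a p b q : 'I_n) : a != p -> b != q ->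
  (b == a) || (b == ordS a) -> (q == a) || (q == ordS a) ->
  (b == p) || (b == ordS p) -> (q == p) || (q == ordS p) -> False.
Proof.
move=> ap bq /orP [] /eqP Eb /orP [] /eqP Eq /orP [] /eqP E1 /orP [] /eqP E2.
all: fin n.
Qed.

Lemma S0_wres : wres S0.
Proof.
move=> [a b] [p q] Hxy.
case: (eqVneq a p) => [E|ap].
  subst p; have bq : b != q by move: Hxy; rewrite xpair_eqE eqxx.
  rewrite DR // !S0_c ?S0_r //.
  by move: ((a, b) \in S0) ((a, q) \in S0) => [] [].
case: (eqVneq b q) => [E|bq].
  subst q; rewrite DC // !S0_r.
  by move: ((a, b) \in S0) ((p, b) \in S0) => [] [].
have E := @DGP S0 (a, b) (p, q) ap bq.
rewrite /= !S0_c ?S0_r // in E.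
move: E; set D := DeltaS _ _ _ _; clearbody D.
have M : forall u v : 'I_n, ((u, v) \in S0) = (v == u) || (v == ordS u) by move=> u v; rewrite inE.
have N := norect ap bq.
rewrite -!M in N.
move: ((a, b) \in S0) ((p, q) \in S0) ((a, q) \in S0) ((p, b) \in S0) N => [] [] [] [] N; try lia.


Qed.

Lemma S0_card : #|S0| = 2 * n.
Proof.
rewrite card_r.
have -> : \sum_(i < n) r S0 i = \sum_(i < n) 2 by apply: eq_bigr => i _; exact: S0_r.
by rewrite sum_nat_const card_ord mulnC.
Qed.

End K.

Lemma wres_iff n (S : {set ('I_n * 'I_n)}) : weak_resolving (KnKn_adj n) 3 S -> wres S.
Proof. by move=> /forallP H x y Hxy; move: (H x) => /forallP /(_ y); rewrite Hxy. Qed.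

Lemma iff_wres n (S : {set ('I_n * 'I_n)}) : wres S -> weak_resolving (KnKn_adj n) 3 S.
Proof. by move=> H; apply/forallP => x; apply/forallP => y; apply/implyP; exact: H. Qed.

Lemma bigmin_le (I : eqType) (s : seq I) (P : pred I) (F : I -> nat) N x :
  x \in s -> P x -> \big[minn/N]_(i <- s | P i) F i <= F x.
Proof.
elim: s => // y s IH; rewrite inE big_cons => /orP [/eqP <-|Hs] Px.
  by rewrite Px geq_minl.
case: (P y); last exact: IH.
by rewrite (leq_trans (geq_minr _ _)) // IH.
Qed.

Theorem mainTheorem4 (n : nat) : 4 <= n -> wdim (KnKn_adj n) 3 = (2 * n)%N.
Proof.
move=> n4; have n3 : 3 <= n by lia.
apply/eqP; rewrite eqn_leq; apply/andP; split.
  rewrite -(S0_card n3); apply: bigmin_le; first exact: mem_index_enum.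
  exact: iff_wres (S0_wres n3).
rewrite /wdim; apply: (big_ind (fun m => 2 * n <= m)).
- by rewrite card_prod card_ord; nia.
- by move=> x y Hx Hy; rewrite leq_min Hx Hy.
- by move=> S /wres_iff; exact: lower.
Qed.
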